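(* Fix an integer $k\ge 2$ and constants $\alpha>0$, $0<p<1$, and let $\tau=\frac1{1-p}$, $r_{cr}=\frac{1}{\ln\tau}$. Suppose $k<\frac{\tau\ln\tau}{\tau-1}$. Then there exists $r_0<r_{cr}$ such that for every $r\in(r_0,r_{cr})$, the number $X$ of solutions of a random instance of Model RB with parameters $(n,\alpha,r,k,p)$ satisfies $\mathbb{E}[X]^2/\mathbb{E}[X^2]=o(1)$ as $n\to\infty$.
   Context: Model RB with parameters $(n,\alpha,r,k,p)$, where $n$ is the number of variables, $\alpha>0$, $r>0$, $k\ge 2$ an integer and $0<p<1$: there are $n$ variables $x_1,\dots,x_n$, each with the same domain $D$ of size $d=n^{\alpha}$ (treated as an integer). A random instance is generated as follows: (1) select, independently with repetition, $t=rn\ln d$ constraints, the scope of each being a set of $k$ distinct variables chosen uniformly at random among the $n$ variables; (2) for each constraint, select uniformly at random without repetition a set of $q=p\,d^{k}$ ''incompatible'' tuples from $D^{k}$. An assignment to all variables is a solution if for every constraint the tuple of values of its scope is not incompatible. Limits are as $n\to\infty$ with $\alpha,r,k,p$ fixed. *)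

(* Defs.v *)
From Stdlib Require Import Reals.
From mathcomp Require Import all_boot.

Set Implicit Arguments.
Unset Strict Implicit.
Unset Printing Implicit Defensive.

(* floor of a real, as a nat (negative values are sent to 0) *)
Definition nfloor (x : R) : nat := Z.to_nat (Int_part x).

Definition RB_d (n : nat) (alpha : R) : nat := nfloor (Rpower (INR n) alpha).
Definition RB_t (n : nat) (alpha r : R) : nat :=
  nfloor (Rmult (Rmult r (INR n)) (ln (INR (RB_d n alpha)))).
Definition RB_q (n : nat) (alpha : R) (k : nat) (p : R) : nat :=
  nfloor (Rmult p (pow (INR (RB_d n alpha)) k)).

(* A constraint: a scope (set of variables) and a set of incompatible tuples.
   The i-th entry of a tuple is the value of the i-th scope variable in
   increasing order of the variable index. *)
Definition constr (n d k : nat) : finType :=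
  ({set 'I_n} * {set k.-tuple 'I_d})%type.

Definition wf_constr (n d k q : nat) (c : constr n d k) : bool :=
  (#|c.1| == k) && (#|c.2| == q).

Definition sat_constr (n d k : nat) (c : constr n d k) (sigma : {ffun 'I_n -> 'I_d}) : bool :=
  [forall u in c.2, val u != [seq sigma x | x <- enum c.1]].

(* An instance: a t-sequence of constraints (chosen independently, with repetition).
   The valid instances are those whose scopes have k elements and whose
   incompatible sets have q elements; the model draws uniformly among them. *)
Definition RB_instance (n d k t : nat) : finType := {ffun 'I_t -> constr n d k}.

Definition RB_valid (n d k q t : nat) (I : RB_instance n d k t) : bool :=
  [forall i, wf_constr q (I i)].

Definition RB_nsol (n d k t : nat) (I : RB_instance n d k t) : nat :=
  #|[set sigma : {ffun 'I_n -> 'I_d} | [forall i, sat_constr (I i) sigma]]|.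

Definition moment_aux (n d k q t m : nat) : R :=
  Rdiv (INR (\sum_(I : RB_instance n d k t | RB_valid q I) RB_nsol I ^ m))
       (INR #|[set I : RB_instance n d k t | RB_valid q I]|).

Definition RB_moment (n : nat) (alpha r : R) (k : nat) (p : R) (m : nat) : R :=
  moment_aux n (RB_d n alpha) k (RB_q n alpha k p) (RB_t n alpha r) m.

(* Main.v *)
Require Import Defs.
From Stdlib Require Import Reals Lra Lia ZArith.
From Coquelicot Require Import Coquelicot.
Require Import Defs.
From mathcomp Require Import all_boot zify.
Set Implicit Arguments.
Unset Strict Implicit.
Local Open Scope nat_scope.


Lemma card_ffun_forall (t : nat) (C : finType) (P : {set C}) :
  #|[set I : {ffun 'I_t -> C} | [forall i, I i \in P]]| = #|P| ^ t.
Proof.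
rewrite -[in RHS](card_ord t) -card_ffun_on; apply: eq_card => I.
rewrite inE; apply/forallP/ffun_onP => H x; exact: H.
Qed.

Lemma card_sum (T : finType) (P : pred T) : #|[set x | P x]| = \sum_x (P x : nat).
Proof.
rewrite -sum1_card big_mkcond /=; apply: eq_bigr => x _; rewrite inE; by case: (P x).
Qed.

Lemma forall_andb (T : finType) (A B : pred T) :
  [forall i, A i] && [forall i, B i] = [forall i, A i && B i].
Proof.
apply/andP/forallP => [[/forallP HA /forallP HB] i|H]; first by rewrite HA HB.
by split; apply/forallP => i; case/andP: (H i).
Qed.

Lemma swap_count (A B : finType) (V : pred A) (P : A -> pred B) :
  \sum_(a | V a) #|[set b | P a b]| = \sum_b #|[set a | V a && P a b]|.
Proof.
under eq_bigr do rewrite card_sum.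
under [RHS]eq_bigr do rewrite card_sum.
rewrite big_mkcond /=.
transitivity (\sum_a \sum_b ((V a && P a b) : nat)).
  apply: eq_bigr => a _; case: (V a) => //=.
  by rewrite big1.
by rewrite exchange_big.
Qed.

Lemma moment1_eq n d k q t :
  \sum_(I : RB_instance n d k t | RB_valid q I) RB_nsol I ^ 1 =
  \sum_(s : {ffun 'I_n -> 'I_d}) #|[set c : constr n d k | wf_constr q c && sat_constr c s]| ^ t.
Proof.
under eq_bigr do rewrite expn1 /RB_nsol.
rewrite swap_count; apply: eq_bigr => s _.
rewrite -card_ffun_forall; apply: eq_card => I.
rewrite !inE /RB_valid forall_andb; apply: eq_forallb => i; by rewrite inE.
Qed.

Lemma moment2_eq n d k q t :
  \sum_(I : RB_instance n d k t | RB_valid q I) RB_nsol I ^ 2 =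
  \sum_(s : {ffun 'I_n -> 'I_d}) \sum_(s' : {ffun 'I_n -> 'I_d})
     #|[set c : constr n d k | [&& wf_constr q c, sat_constr c s & sat_constr c s']]| ^ t.
Proof.
transitivity (\sum_(I : RB_instance n d k t | RB_valid q I)
   #|[set p : {ffun 'I_n -> 'I_d} * {ffun 'I_n -> 'I_d} |
        [forall i, sat_constr (I i) p.1] && [forall i, sat_constr (I i) p.2]]|).
  apply: eq_bigr => I _; rewrite /RB_nsol expnS expn1 -cardsX; apply: eq_card => -[a b].
  by rewrite !inE.
rewrite swap_count pair_big /=; apply: eq_bigr => -[s s'] _ /=.
rewrite -card_ffun_forall; apply: eq_card => I.
rewrite !inE /RB_valid !forall_andb; apply: eq_forallb => i; by rewrite inE.
Qed.

Definition seqof n d (s : {ffun 'I_n -> 'I_d}) (S : {set 'I_n}) : seq 'I_d :=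
  [seq s x | x <- enum S].
Definition Bset d k (w : seq 'I_d) : {set k.-tuple 'I_d} := [set u | val u != w].

Lemma sat_Bset n d k (S : {set 'I_n}) (U : {set k.-tuple 'I_d}) s :
  sat_constr ((S, U) : constr n d k) s = (U \subset Bset k (seqof s S)).
Proof.
rewrite /sat_constr /=; apply/forallP/subsetP => H u.
  by move=> uU; rewrite inE; have := H u; rewrite uU.
by apply/implyP => uU; have := H u uU; rewrite inE.
Qed.

Lemma cardE_le1 d k (w : seq 'I_d) : #|[set u : k.-tuple 'I_d | val u == w]| <= 1.
Proof.
apply/card_le1_eqP => u v; rewrite !inE => /eqP hu /eqP hv.
by apply: val_inj; rewrite hu hv.
Qed.

Lemma cardT_tuple d k : #|{: k.-tuple 'I_d}| = d ^ k.
Proof. by rewrite card_tuple card_ord. Qed.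

Lemma Bset_C d k w : Bset k w = ~: [set u : k.-tuple 'I_d | val u == w].
Proof. by apply/setP => u; rewrite !inE. Qed.

Lemma card_Bset_ge d k (w : seq 'I_d) : d ^ k - 1 <= #|Bset k w|.
Proof.
rewrite Bset_C; have := cardE_le1 k w.
have := cardsC [set u : k.-tuple 'I_d | val u == w]; rewrite cardT_tuple.
move: (#|_|) (#|~: _|) => a b; lia.
Qed.

Lemma card_Bset2_ge d k (w w' : seq 'I_d) : d ^ k - 2 <= #|Bset k w :&: Bset k w'|.
Proof.
rewrite !Bset_C -setCU.
have := cardsC ([set u : k.-tuple 'I_d | val u == w] :|: [set u | val u == w']).
rewrite cardT_tuple.
have := cardsUI [set u : k.-tuple 'I_d | val u == w] [set u | val u == w'].
have := cardE_le1 k w; have := cardE_le1 k w'.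
move: #|[set u : k.-tuple 'I_d | val u == w]| #|[set u : k.-tuple 'I_d | val u == w']| => a b.
move: (#|_ :|: _|) (#|_ :&: _|) (#|~: _|) => x y z; lia.
Qed.

Lemma card_Bset_le d k (w : seq 'I_d) : size w = k -> #|Bset k w| <= d ^ k - 1.
Proof.
move=> hw; rewrite Bset_C.
have := cardsC [set u : k.-tuple 'I_d | val u == w]; rewrite cardT_tuple.
have : 0 < #|[set u : k.-tuple 'I_d | val u == w]|.
  apply/card_gt0P; exists (Tuple (introT eqP hw)); by rewrite inE.
move: (#|_|) (#|~: _|) => a b; lia.
Qed.

Lemma size_seqof n d (s : {ffun 'I_n -> 'I_d}) S : size (seqof s S) = #|S|.
Proof. by rewrite /seqof size_map cardE. Qed.

Lemma card_constr_dep n d k (P : pred {set 'I_n}) (Q : {set 'I_n} -> pred {set k.-tuple 'I_d}) :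
  #|[set c : constr n d k | P c.1 && Q c.1 c.2]| = \sum_(S | P S) #|[set U | Q S U]|.
Proof.
rewrite (card_sum (fun c : constr n d k => P c.1 && Q c.1 c.2)) -(pair_big predT predT (fun S U => (P S && Q S U) : nat)) /=.
rewrite [RHS]big_mkcond; apply: eq_bigr => S _; case: (P S) => /=.
  by rewrite (card_sum (Q S)).
by rewrite big1.
Qed.

Lemma card_qsub T (B : {set T}) q : #|[set U : {set T} | (#|U| == q) && (U \subset B)]| = 'C(#|B|, q).
Proof. rewrite -cards_draws; apply: eq_card => U; by rewrite !inE andbC. Qed.

Lemma sum_cond_const (T : finType) (P : pred T) c :
  \sum_(x | P x) c = #|[set x | P x]| * c.
Proof. rewrite -sum_nat_const; apply: eq_bigl => x; by rewrite inE. Qed.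

Lemma N0_eq n d k q : #|[set c : constr n d k | wf_constr q c]| = 'C(n,k) * 'C(d^k, q).
Proof.
have -> : #|[set c : constr n d k | wf_constr q c]| = \sum_(S : {set 'I_n} | #|S| == k) #|[set U : {set k.-tuple 'I_d} | #|U| == q]|.
  rewrite -(card_constr_dep (fun S => #|S| == k) (fun S U => #|U| == q)).
  by apply: eq_card => c; rewrite !inE.
by rewrite sum_cond_const !card_draws cardT_tuple card_ord.
Qed.

Lemma N1_le n d k q s : #|[set c : constr n d k | wf_constr q c && sat_constr c s]| <= 'C(n,k) * 'C(d^k - 1, q).
Proof.
have -> : #|[set c : constr n d k | wf_constr q c && sat_constr c s]| =
   \sum_(S : {set 'I_n} | #|S| == k) #|[set U : {set k.-tuple 'I_d} | (#|U| == q) && (U \subset Bset k (seqof s S))]|.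
  rewrite -(card_constr_dep (fun S => #|S| == k) (fun S U => (#|U| == q) && (U \subset Bset k (seqof s S)))).
  by apply: eq_card => -[S U]; rewrite !inE /wf_constr sat_Bset /= andbA.
have -> : 'C(n,k) = #|[set S : {set 'I_n} | #|S| == k]| by rewrite card_draws card_ord.
rewrite -sum_cond_const.
apply: leq_sum => S /eqP hS; rewrite card_qsub.
apply: leq_bin2l; apply: card_Bset_le; by rewrite size_seqof.
Qed.

Lemma N2_ge n d k q (A : {set 'I_n}) (s s' : {ffun 'I_n -> 'I_d}) : {in A, forall x, s x = s' x} ->
  'C(#|A|,k) * 'C(d^k-1,q) + ('C(n,k) - 'C(#|A|,k)) * 'C(d^k-2,q) <=
  #|[set c : constr n d k | [&& wf_constr q c, sat_constr c s & sat_constr c s']]|.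
Proof.
move=> hA.
have -> : #|[set c : constr n d k | [&& wf_constr q c, sat_constr c s & sat_constr c s']]| =
   \sum_(S : {set 'I_n} | #|S| == k) #|[set U : {set k.-tuple 'I_d} | (#|U| == q) &&
        (U \subset Bset k (seqof s S) :&: Bset k (seqof s' S))]|.
  rewrite -(card_constr_dep (fun S => #|S| == k) (fun S U => (#|U| == q) && (U \subset Bset k (seqof s S) :&: Bset k (seqof s' S)))).
  by apply: eq_card => -[S U]; rewrite !inE /wf_constr !sat_Bset /= subsetI !andbA.
have hc : 'C(n,k) = #|[set S : {set 'I_n} | (#|S| == k) && (S \subset A)]|
                  + #|[set S : {set 'I_n} | (#|S| == k) && ~~ (S \subset A)]|.
  have e1 := sum_cond_const (fun S : {set 'I_n} => (#|S| == k) && (S \subset A)) 1.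
  have e2 := sum_cond_const (fun S : {set 'I_n} => (#|S| == k) && ~~ (S \subset A)) 1.
  have e3 := sum_cond_const (fun S : {set 'I_n} => (#|S| == k)) 1.
  rewrite muln1 in e1; rewrite muln1 in e2; rewrite muln1 in e3; rewrite -[n in 'C(n, _)]card_ord -card_draws -e3 (bigID (fun S : {set 'I_n} => S \subset A) (fun S : {set 'I_n} => #|S| == k)) /=.
  by rewrite e1 e2.
have ha : #|[set S : {set 'I_n} | (#|S| == k) && (S \subset A)]| = 'C(#|A|,k).
  rewrite -cards_draws; apply: eq_card => S; by rewrite !inE andbC.
rewrite (bigID (fun S : {set 'I_n} => S \subset A) (fun S : {set 'I_n} => #|S| == k)) /=; apply: leq_add.
  rewrite -ha -sum_cond_const; apply: leq_sum => S /andP [_ hSA].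
  have -> : seqof s' S = seqof s S.
    apply/esym/eq_in_map => x; rewrite mem_enum => xS; apply: hA; exact: (subsetP hSA).
  rewrite setIid card_qsub; apply: leq_bin2l; exact: card_Bset_ge.
have -> : 'C(n,k) - 'C(#|A|,k) = #|[set S : {set 'I_n} | (#|S| == k) && ~~ (S \subset A)]|.
  by rewrite hc ha addKn.
rewrite -sum_cond_const; apply: leq_sum => S _.
rewrite card_qsub; apply: leq_bin2l; exact: card_Bset2_ge.
Qed.

Lemma card_agree n d (A : {set 'I_n}) (s : {ffun 'I_n -> 'I_d}) :
  #|[set s' : {ffun 'I_n -> 'I_d} | [forall x in A, s' x == s x]]| = d ^ (n - #|A|).
Proof.
pose F := fun x : 'I_n => if x \in A then pred1 (s x) else [pred y : 'I_d | true].
have -> : #|[set s' : {ffun 'I_n -> 'I_d} | [forall x in A, s' x == s x]]| = #|(family F : simpl_pred {ffun 'I_n -> 'I_d})|.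
  apply: eq_card => s'; rewrite inE; apply/forallP/familyP => H x.
    by rewrite /F; case: (boolP (x \in A)) => xA //=; have := H x; rewrite xA.
  by have := H x; rewrite /F; case: (x \in A).
rewrite card_family foldrE big_map big_enum /=.
transitivity (\prod_(x in ~: A) d).
  rewrite [RHS]big_mkcond /=; apply: eq_bigr => x _; rewrite /F inE.
  by case: (x \in A) => /=; [rewrite card1 | rewrite card_ord].
by rewrite prod_nat_const cardsCs setCK card_ord.
Qed.

Lemma card_Am n m : m <= n -> #|[set x : 'I_n | x < m]| = m.
Proof.
move=> hm; rewrite (card_sum (fun x : 'I_n => x < m)) -big_mkcond /=.
by rewrite -(big_ord_widen _ (fun _ => 1) hm) sum1_card card_ord.
Qed.

Lemma valid_card n d k q t :
  #|[set I : RB_instance n d k t | RB_valid q I]| = ('C(n,k) * 'C(d^k, q)) ^ t.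
Proof.
rewrite -N0_eq -card_ffun_forall; apply: eq_card => I; rewrite !inE.
by apply: eq_forallb => i; rewrite inE.
Qed.

Lemma leq_expn m1 m2 e : m1 <= m2 -> m1 ^ e <= m2 ^ e.
Proof. by move=> h; elim: e => // e IH; rewrite !expnS leq_mul. Qed.

Lemma S1_le n d k q t :
  \sum_(I : RB_instance n d k t | RB_valid q I) RB_nsol I ^ 1 <= d ^ n * ('C(n,k) * 'C(d^k - 1, q)) ^ t.
Proof.
rewrite moment1_eq.
have -> : d ^ n = #|{: {ffun 'I_n -> 'I_d}}| by rewrite card_ffun !card_ord.
rewrite -sum1_card big_distrl /=; apply: leq_sum => s _; rewrite mul1n.
by apply: leq_expn; apply: N1_le.
Qed.

Lemma S2_ge n d k q t m : m <= n ->
  d ^ n * (d ^ (n - m) * ('C(m,k) * 'C(d^k-1,q) + ('C(n,k) - 'C(m,k)) * 'C(d^k-2,q)) ^ t)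
  <= \sum_(I : RB_instance n d k t | RB_valid q I) RB_nsol I ^ 2.
Proof.
move=> hm; rewrite moment2_eq.
set A := [set x : 'I_n | x < m].
have hA : #|A| = m by apply: card_Am.
have -> : d ^ n = #|{: {ffun 'I_n -> 'I_d}}| by rewrite card_ffun !card_ord.
rewrite -sum1_card big_distrl /=; apply: leq_sum => s _; rewrite mul1n.
rewrite -hA -(card_agree A s) -sum1_card big_distrl /=.
rewrite [X in X <= _]big_mkcond /=.
apply: leq_sum => s' _; rewrite inE mul1n.
case: (boolP [forall x in A, s' x == s x]) => // /forall_inP hag.
apply: leq_expn; apply: N2_ge => x xA; apply/esym/eqP; exact: hag.
Qed.

Lemma binC1 D q : D * 'C(D - 1, q) = (D - q) * 'C(D, q).
Proof. by rewrite subn1 mul_bin_down. Qed.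

Lemma binC2 D q : (D - 1) * 'C(D - 2, q) = (D - 1 - q) * 'C(D - 1, q).
Proof. have -> : D - 2 = (D - 1).-1 by rewrite -subn1 -subnDA. by rewrite mul_bin_down. Qed.

Lemma ffact_lb m k : (m - k) ^ k <= 'C(m, k) * k`!.
Proof.
rewrite bin_ffact ffact_prod -(card_ord k) -prod_nat_const card_ord.
apply: leq_prod => i _; apply: leq_sub2l; exact: ltnW (ltn_ord i).
Qed.

Lemma ffact_ub n k : 'C(n, k) * k`! <= n ^ k.
Proof.
rewrite bin_ffact ffact_prod -(card_ord k) -prod_nat_const card_ord.
apply: leq_prod => i _; exact: leq_subr.
Qed.
Local Open Scope R_scope.

Lemma nfloor_spec x : 0 <= x -> INR (nfloor x) <= x /\ x < INR (nfloor x) + 1.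
Proof.
move=> hx; rewrite /nfloor.
have [h1 h2] := base_Int_part x.
have hz : (0 <= Int_part x)%Z.
  have : -1 < IZR (Int_part x) by lra.
  move=> h; have : (-1 < Int_part x)%Z by apply: lt_IZR.
  lia.
rewrite INR_IZR_INZ Z2Nat.id //; lra.
Qed.

Lemma deriv_eq_aux (k:nat) tau : 1 < tau -> (tau - 1) * (1 * (INR k * 1)) * / tau + - (1 * ln tau) =
  INR k * (tau - 1) / tau - ln tau.
Proof. intros. field. lra. Qed.

Lemma exists_s0 (k : nat) (tau : R) : (1 <= k)%nat -> 1 < tau ->
  INR k * (tau - 1) < tau * ln tau ->
  exists s, 0 < s < 1 /\ s * ln tau < ln (1 + (tau - 1) * s ^ k).
Proof.
move=> hk ht hkt.
set f := fun s => ln (1 + (tau - 1) * s ^ k) - s * ln tau.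
set l := INR k * (tau - 1) / tau - ln tau.
have hl : l < 0.
  rewrite /l; apply: (Rmult_lt_reg_r tau); first lra.
  rewrite Rmult_0_l Rmult_minus_distr_r; field_simplify; lra.
have hd : derivable_pt_lim f 1 l.
  apply is_derive_Reals; rewrite /f /l.
  auto_derive.
    rewrite pow1; lra.
  have e : 1 + (tau - 1) * 1 ^ k = tau by rewrite pow1; ring.
  rewrite e !pow1; apply: deriv_eq_aux; lra.
have [del hdel] := hd (- l / 2) ltac:(lra).
set h := - Rmin del 1 / 2.
have hdp := cond_pos del.
have hm1 : 0 < Rmin del 1 by apply: Rmin_glb_lt; lra.
have hm2 : Rmin del 1 <= 1 := Rmin_r _ _.
have hm3 : Rmin del 1 <= del := Rmin_l _ _.
have hh : h <> 0 by rewrite /h; lra.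
have hh2 : Rabs h < del by rewrite /h Rabs_left; lra.
have := hdel h hh hh2.
have f1 : f 1 = 0 by rewrite /f pow1 Rmult_1_r (_ : 1 + (tau - 1) = tau) //; ring.
rewrite f1 Rminus_0_r => hab.
have hfh : f (1 + h) / h < l / 2.
  have := Rle_abs (f (1 + h) / h - l); lra.
have hneg : h < 0 by rewrite /h; lra.
have : 0 < f (1 + h).
  have : f (1 + h) / h * h = f (1 + h) by field.
  move=> e; rewrite -e.
  have : f (1 + h) / h < 0 by lra.
  move=> hq; nra.
rewrite /f => hpos.
exists (1 + h); split; first by rewrite /h; lra.
lra.
Qed.

Lemma ratio_alg (E1 E2 U1 W : R): 0 <= E1 -> E1 <= U1 -> 0 < W -> W <= E2 -> E1^2/E2 <= U1^2/W.
Proof.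
move=> h1 h2 h3 h4.
apply: (Rle_trans _ (E1^2/W)).
  rewrite /Rdiv; apply: Rmult_le_compat_l; first by apply: pow_le.
  apply: Rinv_le_contravar => //.
rewrite /Rdiv; apply: Rmult_le_compat_r; first by apply: Rlt_le; apply: Rinv_0_lt_compat.
apply: pow_incr; lra.
Qed.

Lemma powdiv (x y : R) (t : nat) : y <> 0 -> (x / y) ^ t = x ^ t / y ^ t.
Proof.
move=> hy; elim: t => [|t IH] /=; first by field.
rewrite IH; field; split => //; exact: pow_nonzero.
Qed.

Lemma powsq (x : R) (t : nat) : (x ^ 2) ^ t = (x ^ t) ^ 2.
Proof. by rewrite -!pow_mult Nat.mul_comm. Qed.

Lemma pow_alg (dr cr C0 C1 L : R) (n m t : nat): (m <= n)%coq_nat -> 0<dr -> 0<cr -> 0<C0 -> 0 < L ->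
 (dr^n * (cr*C1)^t / (cr*C0)^t)^2 / (dr^n * (dr^(n-m) * L^t) / (cr*C0)^t)
   = dr^m * ((cr*C1)^2/(cr*C0*L))^t.
Proof.
move=> hmn hd hc h0 hL.
have en : dr ^ n = dr ^ m * dr ^ (n - m).
  rewrite -pow_add; congr (_ ^ _); lia.
have hB : 0 < (cr*C0)^t by apply: pow_lt; nra.
have hLt : 0 < L^t by apply: pow_lt.
have hP : 0 < dr^m by apply: pow_lt.
have hQ : 0 < dr^(n-m) by apply: pow_lt.
have e1 : ((cr*C1)^2/(cr*C0*L))^t = ((cr*C1)^t)^2 / ((cr*C0)^t * L^t).
  rewrite powdiv; last by apply: Rgt_not_eq; apply: Rmult_lt_0_compat => //; nra.
  by rewrite powsq (Rpow_mult_distr (cr*C0) L).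
rewrite e1 en.
move: ((cr*C1)^t) ((cr*C0)^t) (L^t) (dr^m) (dr^(n-m)) hB hLt hP hQ => A B Lt P Q hB hLt hP hQ.
field; repeat split; lra.
Qed.

Lemma X_le_G (cr ar C0 C1 C2 Dr qr bl : R) :
 0 < cr -> 0 <= ar <= cr -> 0 < C0 -> Dr * C1 = (Dr - qr) * C0 -> (Dr - 1) * C2 = (Dr - 1 - qr) * C1 ->
 0 <= qr -> 2 <= Dr - qr -> 0 <= bl <= ar / cr ->
 (cr*C1)^2/(cr*C0*(ar*C1 + (cr-ar)*C2)) <=
 (1 - qr/Dr)^2 / ((1 - qr/Dr)*(1 - qr/(Dr-1)) + bl*((1 - qr/Dr) - (1 - qr/Dr)*(1 - qr/(Dr-1)))).
Proof.
move=> hc ha h0 e1 e2 hq hD hb.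
have hDp : 0 < Dr by lra.
have hD1 : 0 < Dr - 1 by lra.
set r1 := 1 - qr/Dr.
set u := 1 - qr/(Dr-1).
have er1 : r1 = (Dr - qr)/Dr by rewrite /r1; field; lra.
have eu : u = (Dr - 1 - qr)/(Dr - 1) by rewrite /u; field; lra.
have hr1 : 0 < r1 by rewrite er1; apply: Rdiv_lt_0_compat; lra.
have hu : 0 < u by rewrite eu; apply: Rdiv_lt_0_compat; lra.
have hu1 : u <= 1.
  have : 0 <= qr/(Dr-1) by apply: Rdiv_le_0_compat; lra.
  rewrite /u; lra.
have eC1 : C1 = r1 * C0.
  rewrite er1; apply: (Rmult_eq_reg_l Dr); [rewrite e1; field|]; lra.
have eC2 : C2 = r1 * u * C0.
  rewrite eu; apply: (Rmult_eq_reg_l (Dr - 1)); [rewrite e2 eC1; field|]; lra.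
have hr2 : 0 < r1 * u by nra.
have hr12 : r1 * u <= r1 by nra.
have hpos : 0 < ar * (r1 * C0) + (cr - ar) * (r1 * u * C0).
  have : 0 <= ar * (r1 - r1 * u) by nra.
  have : 0 < cr * (r1 * u) by nra.
  nra.
have -> : (cr*C1)^2/(cr*C0*(ar*C1 + (cr-ar)*C2)) = r1^2 / (r1 * u + ar / cr * (r1 - r1 * u)).
  rewrite eC1 eC2; field; repeat split; try lra.
  have : 0 <= ar * (r1 - r1 * u) by nra.
  have : 0 < r1 * u * cr by nra.
  lra.
have hden : 0 < r1 * u + bl * (r1 - r1 * u).
  have : 0 <= bl * (r1 - r1 * u) by apply: Rmult_le_pos; lra.
  lra.
rewrite /Rdiv; apply: Rmult_le_compat_l; first by apply: pow_le; lra.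
apply: Rinv_le_contravar => //.
have : bl * (r1 - r1 * u) <= ar / cr * (r1 - r1 * u) by apply: Rmult_le_compat_r; lra.
lra.
Qed.
Lemma INR_muln (a b : nat) : INR (a * b)%N = INR a * INR b.
Proof. by rewrite -mult_INR. Qed.
Lemma INR_addn (a b : nat) : INR (a + b)%N = INR a + INR b.
Proof. by rewrite -plus_INR. Qed.
Lemma INR_subn (a b : nat) : (b <= a)%N -> INR (a - b)%N = INR a - INR b.
Proof. move=> h; rewrite -minus_INR //; apply/leP. done. Qed.
Lemma INR_expn (a b : nat) : INR (a ^ b)%N = INR a ^ b.
Proof. elim: b => [|b IH]; first by rewrite expn0 /=. by rewrite expnS INR_muln IH /=. Qed.

Definition Gfun (Dr qr bl : R) : R :=
  (1 - qr/Dr)^2 / ((1 - qr/Dr)*(1 - qr/(Dr-1)) + bl*((1 - qr/Dr) - (1 - qr/Dr)*(1 - qr/(Dr-1)))).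

Lemma bound_n (n d k q t m : nat) :
  (m <= n)%N -> (k <= n)%N -> (0 < k)%N -> (0 < d)%N -> (q + 2 <= d ^ k)%N ->
  moment_aux n d k q t 1 ^ 2 / moment_aux n d k q t 2 <=
  INR d ^ m * Gfun (INR d ^ k) (INR q) ((INR (m - k) / INR n) ^ k) ^ t.
Proof.
move=> hmn hkn hk0 hd hqD.
set D := (d ^ k)%N.
set c := 'C(n, k). set a := 'C(m, k).
set C0 := 'C(D, q). set C1 := 'C(D - 1, q). set C2 := 'C(D - 2, q).
set L := (a * C1 + (c - a) * C2)%N.
have hc : (0 < c)%N by rewrite bin_gt0.
have hC2 : (0 < C2)%N by rewrite bin_gt0; lia.
have hC12 : (C2 <= C1)%N by apply: leq_bin2l; lia.
have hC0 : (0 < C0)%N by rewrite bin_gt0; lia.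
have hac : (a <= c)%N by apply: leq_bin2l.
have hL : (0 < L)%N.
  have : (c * C2 <= L)%N.
    rewrite /L; have {1}-> : c = (a + (c - a))%N by lia.
    rewrite mulnDl; apply: leq_add => //; exact: leq_mul.
  move=> h; apply: (leq_trans _ h); by rewrite muln_gt0 hc hC2.
have hn0 : (0 < n)%N by lia.
rewrite /moment_aux valid_card.
set S1 := (\sum_(I | _) _)%N.
set S2 := (\sum_(I | _) _)%N.
have hS1 : (S1 <= d ^ n * (c * C1) ^ t)%N by apply: S1_le.
have hS2 : (d ^ n * (d ^ (n - m) * L ^ t) <= S2)%N by apply: S2_ge.
have hV : 0 < INR ((c * C0) ^ t)%N.
  apply: lt_0_INR; apply/ltP; rewrite expn_gt0 muln_gt0 hc hC0 //.
have hdr : 0 < INR d by apply: lt_0_INR; apply/ltP.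
have hcr : 0 < INR c by apply: lt_0_INR; apply/ltP.
have hC0r : 0 < INR C0 by apply: lt_0_INR; apply/ltP.
have hLr : 0 < INR L by apply: lt_0_INR; apply/ltP.
apply: Rle_trans.
  apply: (ratio_alg (U1 := INR (d ^ n * (c * C1) ^ t)%N / INR ((c * C0) ^ t)%N)
                    (W := INR (d ^ n * (d ^ (n - m) * L ^ t))%N / INR ((c * C0) ^ t)%N)).
  - apply: Rdiv_le_0_compat => //; exact: pos_INR.
  - apply: Rmult_le_compat_r; first by apply: Rlt_le; apply: Rinv_0_lt_compat.
    apply: le_INR; apply/leP; exact: hS1.
  - apply: Rdiv_lt_0_compat => //; apply: lt_0_INR; apply/ltP.
    by rewrite !muln_gt0 !expn_gt0 hd hL.
  - apply: Rmult_le_compat_r; first by apply: Rlt_le; apply: Rinv_0_lt_compat.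
    apply: le_INR; apply/leP; exact: hS2.
rewrite !INR_muln !INR_expn !INR_muln.
rewrite pow_alg //; last by apply/leP.
apply: Rmult_le_compat_l; first by apply: pow_le; lra.
apply: pow_incr; split.
  apply: Rdiv_le_0_compat; first by apply: pow2_ge_0.
  apply: Rmult_lt_0_compat => //; nra.
rewrite /L INR_addn !INR_muln INR_subn //.
have hDr : INR D = INR d ^ k by rewrite /D INR_expn.
rewrite /Gfun -hDr.
apply: X_le_G => //.
- split; [exact: pos_INR| apply: le_INR; apply/leP; exact: hac].
- rewrite -INR_muln binC1 INR_muln INR_subn //; last by lia.
- have e := congr1 INR (binC2 D q).
  rewrite !INR_muln (INR_subn (a := (D - 1)%N) (b := q)) in e; last by lia.
  rewrite (INR_subn (a := D) (b := 1)) /= in e; last by lia.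
  exact: e.
- exact: pos_INR.
- rewrite -INR_subn; last by lia.
  have : (2 <= INR (D - q)%N) by apply: (le_INR 2); apply/leP; lia.
  done.
- split; first by apply: pow_le; apply: Rdiv_le_0_compat; [exact: pos_INR| apply: lt_0_INR; apply/ltP; exact: hn0].
  have hk1 := ffact_lb m k.
  have hk2 := ffact_ub n k.
  have hf : 0 < INR (k`!) by apply: lt_0_INR; apply/ltP; exact: fact_gt0.
  have h1 : INR (m - k) ^ k <= INR a * INR (k`!).
    rewrite -INR_expn -INR_muln; apply: le_INR; apply/leP; exact: hk1.
  have h2 : INR c * INR (k`!) <= INR n ^ k.
    rewrite -INR_expn -INR_muln; apply: le_INR; apply/leP; exact: hk2.
  have hnr : 0 < INR n by apply: lt_0_INR; apply/ltP.
  rewrite powdiv; last by lra.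
  have hnk : 0 < INR n ^ k by apply: pow_lt.
  apply: (Rle_trans _ (INR a * INR (k`!) / (INR c * INR k`!))).
    rewrite /Rdiv; apply: Rmult_le_compat => //.
    + apply: pow_le; exact: pos_INR.
    + by apply: Rlt_le; apply: Rinv_0_lt_compat.
    + apply: Rinv_le_contravar => //; nra.
  right; field; lra.
Qed.

Definition Inf (u : nat -> R) := forall M, eventually (fun n => M < u n).

Lemma ev_ge (N : nat) : eventually (fun n => (N <= n)%N).
Proof. exists N => n /leP //. Qed.

Lemma Inf_lim u : Inf u -> is_lim_seq u p_infty.
Proof. move=> h; apply/is_lim_seq_spec => M; exact: h. Qed.

Lemma Inf_inv u : Inf u -> is_lim_seq (fun n => / u n) 0.
Proof.
move=> h; have := is_lim_seq_inv u p_infty (Inf_lim h).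
by apply => //.
Qed.

Lemma Inf_INR : Inf INR.
Proof. have := proj2 (is_lim_seq_spec INR p_infty) is_lim_seq_INR; done. Qed.

Lemma Inf_le u v : Inf u -> eventually (fun n => u n <= v n) -> Inf v.
Proof.
move=> hu hv M; apply: filter_imp (filter_and _ _ (hu M) hv) => n [h1 h2]; lra.
Qed.

Lemma floor_ratio (x y : nat -> R) (l : R) : Inf y -> eventually (fun n => 0 <= x n) ->
  is_lim_seq (fun n => x n / y n) l -> is_lim_seq (fun n => INR (nfloor (x n)) / y n) l.
Proof.
move=> hy hx hl.
apply: (is_lim_seq_le_le_loc (fun n => x n / y n - / y n) _ (fun n => x n / y n)).
- apply: filter_imp (filter_and _ _ (hy 0) hx) => n [h1 h2].
  have [f1 f2] := nfloor_spec h2.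
  split.
  + have -> : x n / y n - / y n = (x n - 1) / y n by field; lra.
    apply: Rmult_le_compat_r; [apply: Rlt_le; apply: Rinv_0_lt_compat|]; lra.
  + apply: Rmult_le_compat_r; [apply: Rlt_le; apply: Rinv_0_lt_compat|]; lra.
- have := is_lim_seq_minus' _ _ l 0 hl (Inf_inv hy).
  by rewrite Rminus_0_r.
- exact: hl.
Qed.

Lemma Rpower_inf alpha : 0 < alpha -> Inf (fun n => Rpower (INR n) alpha).
Proof.
move=> ha M.
set y := Rpower (Rabs M + 1) (/ alpha).
have hy : 0 < y by rewrite /y /Rpower; apply: exp_pos.
have [f1 f2] := nfloor_spec (Rlt_le _ _ hy).
exists (S (nfloor y)) => n hn.
have hyn : y < INR n.
  have := le_INR _ _ hn; rewrite S_INR; lra.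
have := Rlt_Rpower_l _ _ alpha ha (conj hy hyn).
rewrite /y Rpower_mult Rinv_l; last by lra.
rewrite Rpower_1; last by have := Rabs_pos M; lra.
have := Rle_abs M; lra.
Qed.

Lemma d_Inf alpha : 0 < alpha -> Inf (fun n => INR (RB_d n alpha)).
Proof.
move=> ha M; apply: filter_imp (Rpower_inf ha (M + 1)) => n h.
rewrite /RB_d.
have hp : 0 <= Rpower (INR n) alpha by rewrite /Rpower; apply: Rlt_le; apply: exp_pos.
have [f1 f2] := nfloor_spec hp; lra.
Qed.

Lemma pow_ge_base x k : 1 <= x -> (1 <= k)%N -> x <= x ^ k.
Proof.
move=> hx hk; case: k hk => [//|k _] /=.
have := pow_R1_Rle x k hx; nra.
Qed.

Lemma Dr_Inf alpha k : 0 < alpha -> (1 <= k)%N -> Inf (fun n => INR (RB_d n alpha) ^ k).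
Proof.
move=> ha hk; apply: (Inf_le (d_Inf ha)).
apply: filter_imp (d_Inf ha 1) => n h; apply: pow_ge_base => //; lra.
Qed.

Lemma lim_q_D alpha k p : 0 < alpha -> (1 <= k)%N -> 0 < p ->
  is_lim_seq (fun n => INR (RB_q n alpha k p) / INR (RB_d n alpha) ^ k) p.
Proof.
move=> ha hk hp.
apply: (floor_ratio (x := fun n => p * INR (RB_d n alpha) ^ k)) => //.
- exact: Dr_Inf.
- apply: filter_imp (Dr_Inf ha hk 0) => n h; nra.
- apply: (is_lim_seq_ext_loc (fun _ => p)); last exact: is_lim_seq_const.
  apply: filter_imp (Dr_Inf ha hk 0) => n h; field; lra.
Qed.

Lemma lim_q_D1 alpha k p : 0 < alpha -> (1 <= k)%N -> 0 < p ->
  is_lim_seq (fun n => INR (RB_q n alpha k p) / (INR (RB_d n alpha) ^ k - 1)) p.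
Proof.
move=> ha hk hp.
apply: (floor_ratio (x := fun n => p * INR (RB_d n alpha) ^ k)) => //.
- move=> M; apply: filter_imp (Dr_Inf ha hk (M + 1)) => n h; lra.
- apply: filter_imp (Dr_Inf ha hk 0) => n h; nra.
- apply: (is_lim_seq_ext_loc (fun n => p / (1 - / INR (RB_d n alpha) ^ k))).
    apply: filter_imp (Dr_Inf ha hk 2) => n h; field; lra.
  have := is_lim_seq_div' (fun _ => p) (fun n => 1 - / INR (RB_d n alpha) ^ k) p (1 - 0)
     (is_lim_seq_const p) (is_lim_seq_minus' _ _ _ _ (is_lim_seq_const 1) (Inf_inv (Dr_Inf ha hk))).
  rewrite Rminus_0_r Rdiv_1_r; apply; lra.
Qed.

Lemma lim_m s0 : 0 < s0 -> is_lim_seq (fun n => INR (nfloor (s0 * INR n)) / INR n) s0.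
Proof.
move=> hs.
apply: (floor_ratio (x := fun n => s0 * INR n)) => //.
- exact: Inf_INR.
- exists 0%nat => n _; have := pos_INR n; nra.
- apply: (is_lim_seq_ext_loc (fun _ => s0)); last exact: is_lim_seq_const.
  apply: filter_imp (Inf_INR 0) => n h; field; lra.
Qed.

Lemma lim_mk s0 (k : nat) : 0 < s0 ->
  is_lim_seq (fun n => INR (nfloor (s0 * INR n) - k) / INR n) s0.
Proof.
move=> hs.
apply: (is_lim_seq_ext_loc (fun n => INR (nfloor (s0 * INR n)) / INR n - INR k * / INR n)).
  apply: filter_imp (filter_and _ _ (Inf_INR ((INR k + 1) / s0)) (Inf_INR 0)) => n [h h0].
  have [f1 f2] := nfloor_spec (x := s0 * INR n) ltac:(nra).
  have hkm : INR k <= INR (nfloor (s0 * INR n)).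
    have : (INR k + 1) / s0 * s0 < INR n * s0 by apply: Rmult_lt_compat_r.
    have -> : (INR k + 1) / s0 * s0 = INR k + 1 by field; lra.
    lra.
  rewrite INR_subn; first by field; lra.
  have := INR_le _ _ hkm; move/leP; done.
have := is_lim_seq_minus' _ _ s0 (INR k * 0) (lim_m hs)
  (is_lim_seq_scal_l _ (INR k) 0 (Inf_inv Inf_INR)).
by rewrite Rmult_0_r Rminus_0_r.
Qed.

Lemma Inf_nln alpha : 0 < alpha -> Inf (fun n => INR n * ln (INR (RB_d n alpha))).
Proof.
move=> ha.
have hl2 : 0 < ln 2 by rewrite -ln_1; apply: ln_increasing; lra.
move=> M; apply: filter_imp (filter_and _ _ (Inf_INR (Rabs M / ln 2)) (d_Inf ha 2)) => n [h1 h2].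
have hl : ln 2 <= ln (INR (RB_d n alpha)) by apply: Rlt_le; apply: ln_increasing; lra.
have : Rabs M / ln 2 * ln 2 = Rabs M by field; lra.
have := Rle_abs M.
have : 0 <= Rabs M / ln 2 by apply: Rdiv_le_0_compat => //; apply: Rabs_pos.
nra.
Qed.

Lemma lim_t alpha r : 0 < alpha -> 0 < r ->
  is_lim_seq (fun n => INR (RB_t n alpha r) / (INR n * ln (INR (RB_d n alpha)))) r.
Proof.
move=> ha hr.
apply: (floor_ratio (x := fun n => r * INR n * ln (INR (RB_d n alpha)))) => //.
- exact: Inf_nln.
- apply: filter_imp (Inf_nln ha 0) => n h; nra.
- apply: (is_lim_seq_ext_loc (fun _ => r)); last exact: is_lim_seq_const.
  apply: filter_imp (Inf_nln ha 0) => n h; rewrite (Rmult_assoc r) /Rdiv Rmult_assoc Rinv_r; [ring|lra].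
Qed.

Lemma lim_pow u (l : R) k : is_lim_seq u l -> is_lim_seq (fun n => u n ^ k) (l ^ k).
Proof.
move=> h; elim: k => [|k IH] /=; first exact: is_lim_seq_const.
exact: (is_lim_seq_mult' _ _ _ _ h IH).
Qed.

Definition mseq (s0 : R) (n : nat) : nat := nfloor (s0 * INR n).

Definition Gseq alpha k p s0 n :=
  Gfun (INR (RB_d n alpha) ^ k) (INR (RB_q n alpha k p)) ((INR (mseq s0 n - k) / INR n) ^ k).

Definition Ginf p s0 (k : nat) :=
  (1 - p) ^ 2 / ((1 - p) * (1 - p) + s0 ^ k * ((1 - p) - (1 - p) * (1 - p))).

Lemma lim_G alpha k p s0 : 0 < alpha -> (1 <= k)%N -> 0 < p < 1 -> 0 < s0 ->
  is_lim_seq (Gseq alpha k p s0) (Ginf p s0 k).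
Proof.
move=> ha hk hp hs.
have hA := is_lim_seq_minus' _ _ _ _ (is_lim_seq_const 1) (lim_q_D ha hk (proj1 hp)).
have hB := is_lim_seq_minus' _ _ _ _ (is_lim_seq_const 1) (lim_q_D1 ha hk (proj1 hp)).
have hbl := lim_pow (k:=k) (@lim_mk s0 k hs).
have hAB := is_lim_seq_mult' _ _ _ _ hA hB.
have hden := is_lim_seq_plus' _ _ _ _ hAB (is_lim_seq_mult' _ _ _ _ hbl (is_lim_seq_minus' _ _ _ _ hA hAB)).
have hnum := lim_pow (k:=2) hA.
have hsk : 0 <= s0 ^ k by apply: pow_le; lra.
have hd0 : (1 - p) * (1 - p) + s0 ^ k * ((1 - p) - (1 - p) * (1 - p)) <> 0.
  have : 0 <= s0 ^ k * ((1 - p) - (1 - p) * (1 - p)) by apply: Rmult_le_pos; nra.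
  nra.
exact: (is_lim_seq_div' _ _ _ _ hnum hden hd0).
Qed.

Lemma Ginf_pos p s0 k : 0 < p < 1 -> 0 < s0 -> 0 < Ginf p s0 k.
Proof.
move=> hp hs; rewrite /Ginf.
have hsk : 0 <= s0 ^ k by apply: pow_le; lra.
have : 0 <= s0 ^ k * ((1 - p) - (1 - p) * (1 - p)) by apply: Rmult_le_pos; nra.
move=> h; apply: Rdiv_lt_0_compat; nra.
Qed.

Lemma lim_lnG alpha k p s0 : 0 < alpha -> (1 <= k)%N -> 0 < p < 1 -> 0 < s0 ->
  is_lim_seq (fun n => ln (Gseq alpha k p s0 n)) (ln (Ginf p s0 k)).
Proof.
move=> ha hk hp hs.
apply: is_lim_seq_continuous; last exact: lim_G.
apply/continuity_pt_filterlim; apply: continuous_ln; exact: Ginf_pos.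
Qed.

Definition wseq alpha r k p s0 n :=
  INR (mseq s0 n) / INR n +
  INR (RB_t n alpha r) / (INR n * ln (INR (RB_d n alpha))) * ln (Gseq alpha k p s0 n).

Lemma lim_w alpha r k p s0 : 0 < alpha -> 0 < r -> (1 <= k)%N -> 0 < p < 1 -> 0 < s0 ->
  is_lim_seq (wseq alpha r k p s0) (s0 + r * ln (Ginf p s0 k)).
Proof.
move=> ha hr hk hp hs.
exact: (is_lim_seq_plus' _ _ _ _ (lim_m hs) (is_lim_seq_mult' _ _ _ _ (lim_t ha hr) (lim_lnG ha hk hp hs))).
Qed.

Lemma Rinv_nonneg x : 0 <= x -> 0 <= / x.
Proof.
move=> h; case: (Req_dec x 0) => [->|hx]; first by rewrite Rinv_0; lra.
apply: Rlt_le; apply: Rinv_0_lt_compat; lra.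
Qed.

Lemma moment_nonneg n alpha r k p j : 0 <= RB_moment n alpha r k p j.
Proof. apply: Rmult_le_pos; [exact: pos_INR| apply: Rinv_nonneg; exact: pos_INR]. Qed.

Lemma ratio_nonneg n alpha r k p : 0 <= RB_moment n alpha r k p 1 ^ 2 / RB_moment n alpha r k p 2.
Proof. apply: Rmult_le_pos; [apply: pow2_ge_0| apply: Rinv_nonneg; exact: moment_nonneg]. Qed.

Lemma ev_lt_lim (u : nat -> R) (l a : R) : is_lim_seq u l -> l < a -> eventually (fun n => u n < a).
Proof.
move=> h hl; have := proj2 (is_lim_seq_spec u l) h (mkposreal (a - l) ltac:(lra)).
apply: filter_imp => n /= hn; have := Rle_abs (u n - l); lra.
Qed.

Lemma ev_gt_lim (u : nat -> R) (l a : R) : is_lim_seq u l -> a < l -> eventually (fun n => a < u n).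
Proof.
move=> h hl; have := proj2 (is_lim_seq_spec u l) h (mkposreal (l - a) ltac:(lra)).
apply: filter_imp => n /= hn; have := Rle_abs (- (u n - l)); rewrite Rabs_Ropp; lra.
Qed.

Lemma bound_exp n alpha r k p s0 :
  (mseq s0 n <= n)%N -> (k <= n)%N -> (0 < k)%N -> 2 <= INR (RB_d n alpha) ->
  (RB_q n alpha k p + 2 <= RB_d n alpha ^ k)%N -> 0 < Gseq alpha k p s0 n ->
  RB_moment n alpha r k p 1 ^ 2 / RB_moment n alpha r k p 2 <=
  exp (INR n * ln (INR (RB_d n alpha)) * wseq alpha r k p s0 n).
Proof.
move=> hm hkn hk hd hq hG.
have hd0 : (0 < RB_d n alpha)%N by apply/ltP; apply: INR_lt; rewrite /=; lra.
apply: Rle_trans; first exact: (@bound_n n (RB_d n alpha) k (RB_q n alpha k p) (RB_t n alpha r) (mseq s0 n) hm hkn hk hd0 hq).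
have hdr : 0 < INR (RB_d n alpha) by lra.
have hln : 0 < ln (INR (RB_d n alpha)) by rewrite -ln_1; apply: ln_increasing; lra.
have hn : 0 < INR n by apply: lt_0_INR; apply/ltP; lia.
right.
rewrite -(exp_ln (INR (RB_d n alpha) ^ mseq s0 n)); last exact: pow_lt.
rewrite -(exp_ln (Gfun _ _ _ ^ _)); last by apply: pow_lt; exact: hG.
rewrite -exp_plus !ln_pow //; congr exp.
rewrite /wseq /Gseq; field; split; lra.
Qed.

Lemma key alpha r k p s0 : 0 < alpha -> 0 < r -> (2 <= k)%N -> 0 < p < 1 -> 0 < s0 < 1 ->
  s0 + r * ln (Ginf p s0 k) < 0 ->
  Un_cv (fun n => RB_moment n alpha r k p 1 ^ 2 / RB_moment n alpha r k p 2) 0.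
Proof.
move=> ha hr hk hp hs hL.
set L0 := s0 + r * ln (Ginf p s0 k) in hL.
have hk1 : (1 <= k)%N by lia.
move=> eps heps.
set M := Rabs (2 * ln eps / L0) + 1.
have hlw := lim_w ha hr hk1 hp (proj1 hs); rewrite -/L0 in hlw.
have hw := ev_lt_lim (a := L0 / 2) hlw ltac:(lra).
have hG := ev_gt_lim (a := 0) (lim_G ha hk1 hp (proj1 hs)) (Ginf_pos k hp (proj1 hs)).
have hX := Inf_nln ha M.
have hd := d_Inf ha 2.
have hD := Dr_Inf ha hk1 (2 / (1 - p)).
have hkn := ev_ge k.
have hall := filter_and _ _ hw (filter_and _ _ hG (filter_and _ _ hX (filter_and _ _ hd (filter_and _ _ hD hkn)))).
case: hall => N hN; exists N => n hn.
have [h1 [h2 [h3 [h4 [h5 h6]]]]] := hN n hn.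
rewrite /R_dist Rminus_0_r Rabs_pos_eq; last exact: ratio_nonneg.
have hm : (mseq s0 n <= n)%N.
  have hn0 := pos_INR n.
  have [f1 _] := nfloor_spec (x := s0 * INR n) ltac:(nra).
  apply/leP; apply: INR_le; rewrite /mseq; nra.
have hq : (RB_q n alpha k p + 2 <= RB_d n alpha ^ k)%N.
  have hDr : 0 < INR (RB_d n alpha) ^ k by apply: pow_lt; lra.
  have [f1 _] := nfloor_spec (x := p * INR (RB_d n alpha) ^ k) ltac:(nra).
  apply/leP; apply: INR_le; rewrite INR_addn INR_expn /=.
  rewrite /RB_q.
  have : 2 / (1 - p) * (1 - p) = 2 by field; lra.
  have : 2 / (1 - p) * (1 - p) < INR (RB_d n alpha) ^ k * (1 - p) by apply: Rmult_lt_compat_r; lra.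
  lra.
apply: Rle_lt_trans; first exact: (@bound_exp n alpha r k p s0 hm h6 hk1 ltac:(lra) hq h2).
rewrite -(exp_ln eps) //; apply: exp_increasing.
set X := INR n * ln (INR (RB_d n alpha)) in h3 *.
set w := wseq alpha r k p s0 n in h1 *.
have hM : 0 < M by rewrite /M; have := Rabs_pos (2 * ln eps / L0); lra.
have e1 : X * w <= X * (L0 / 2) by apply: Rmult_le_compat_l; lra.
have e2 : X * (L0 / 2) < M * (L0 / 2) by nra.
have e3 : M * (L0 / 2) <= ln eps.
  rewrite /M.
  have e4 : Rabs (2 * ln eps / L0) * (L0 / 2) = - Rabs (ln eps).
    rewrite /Rdiv Rabs_mult Rabs_mult Rabs_Rinv; last lra.
    rewrite (Rabs_left L0) // Rabs_pos_eq; last lra.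
    field; lra.
  have := Rle_abs (- ln eps); rewrite Rabs_Ropp.
  have : 1 * (L0 / 2) < 0 by lra.
  nra.
lra.
Qed.

Lemma Ginf_eq p s0 k : 0 < p < 1 -> 0 <= s0 ->
  Ginf p s0 k = / (1 + (1 / (1 - p) - 1) * s0 ^ k).
Proof.
move=> hp hs; rewrite /Ginf.
have hsk : 0 <= s0 ^ k by apply: pow_le.
field; split; try lra.
have : 0 <= p * s0 ^ k by nra.
nra.
Qed.

Theorem claim5p3 (k : nat) (alpha p : R) :
  (2 <= k)%nat -> 0 < alpha -> 0 < p < 1 ->
  let tau := 1 / (1 - p) in
  let rcr := 1 / ln tau in
  INR k < tau * ln tau / (tau - 1) ->
  exists r0 : R, r0 < rcr /\
    forall r : R, r0 < r < rcr ->
      Un_cv (fun n : nat =>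
               (RB_moment n alpha r k p 1) ^ 2 / RB_moment n alpha r k p 2) 0.
Proof.
move=> hk ha hp tau rcr hK.
have htau : 1 < tau.
  rewrite /tau; apply: (Rmult_lt_reg_r (1 - p)); first lra.
  have -> : 1 / (1 - p) * (1 - p) = 1 by field; lra.
  lra.
have hlt : 0 < ln tau by rewrite -ln_1; apply: ln_increasing; lra.
have hK' : INR k * (tau - 1) < tau * ln tau.
  have := Rmult_lt_compat_r (tau - 1) _ _ ltac:(lra) hK.
  have -> : tau * ln tau / (tau - 1) * (tau - 1) = tau * ln tau by field; lra.
  done.
have hk1 : (1 <= k)%N by apply/leP; lia.
have [s0 [hs hs']] := exists_s0 hk1 htau hK'.
set l := ln (1 + (tau - 1) * s0 ^ k) in hs'.
have hl : 0 < l.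
  have : 0 < s0 * ln tau by nra.
  lra.
exists (s0 / l); split.
  rewrite /rcr; apply: (Rmult_lt_reg_r (l * ln tau)); first nra.
  have -> : s0 / l * (l * ln tau) = s0 * ln tau by field; lra.
  have -> : 1 / ln tau * (l * ln tau) = l by field; lra.
  exact: hs'.
move=> r [hr0 hr1].
have hr : 0 < r.
  have : 0 < s0 / l by apply: Rdiv_lt_0_compat; lra.
  lra.
apply: (@key alpha r k p s0) => //.
rewrite Ginf_eq //; last lra.
have hpos : 0 < 1 + (1 / (1 - p) - 1) * s0 ^ k.
  have : 0 <= (1 / (1 - p) - 1) * s0 ^ k.
    apply: Rmult_le_pos; [rewrite -/tau; lra| apply: pow_le; lra].
  lra.
rewrite ln_Rinv // -/tau -/l.
have : s0 / l * l < r * l by apply: Rmult_lt_compat_r.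
have -> : s0 / l * l = s0 by field; lra.
lra.
Qed.
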